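(* Let $\operatorname{char}(k)\ne2$. For every term $\lambda$ over $X$, there exist $\alpha_i\in k$ and GDN supertableaux $\lambda_i$ over $X$ with $\ell(\lambda_i)=\ell(\lambda)$ and $r(\lambda_i)\ge r(\lambda)$ such that $\lambda=\sum_i\alpha_i\lambda_i$ in $\mathrm{GDN}_s(X)$. In particular $\mathrm{Tab}_s(X)$ spans $\mathrm{GDN}_s(X)$.
   Context: A GDN superalgebra is a superalgebra $\mathcal A=\mathcal A_0\oplus\mathcal A_1$ over a field $k$ (product $\circ$, $\mathcal A_i\circ\mathcal A_j\subseteq\mathcal A_{i+j}$ mod 2, $|x|=i$ for nonzero $x\in\mathcal A_i$) satisfying for homogeneous $x,y,z$: $x\circ(y\circ z)-(x\circ y)\circ z=(-1)^{|x||y|}(y\circ(x\circ z)-(y\circ x)\circ z)$ and $(x\circ y)\circ z=(-1)^{|y||z|}(x\circ z)\circ y$. $X=X_0\sqcup X_1$ is well-ordered, elements of $X_i$ have parity $i$, and $\mathrm{GDN}_s(X)$ is the free GDN superalgebra on $X$. Terms over $X$: letters of $X$ and products $(\mu\circ\nu)$ of terms, regarded as elements of $\mathrm{GDN}_s(X)$; length $\ell$ is the number of letters. $[\mu_1,\dots,\mu_n]_L=((\cdots(\mu_1\circ\mu_2)\cdots)\circ\mu_n)$, $[\mu_1,\dots,\mu_n]_R=(\mu_1\circ(\cdots\circ(\mu_{n-1}\circ\mu_n)\cdots))$; a simple term is $[a_1,\dots,a_n]_R$ with $a_i\in X$, $n\ge1$. Root number: $r(a)=0$ ($a\in X$), $r((\mu\circ\nu))=r(\mu)+1$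 if $\nu\in X$, else $r(\mu)+r(\nu)$. A GDN supertableau over $X$ is a term $\mu=[a,\mu_1,\dots,\mu_n]_L$ with $a\in X$, $n\ge0$, simple terms $\mu_i=[a_{i,r_i},\dots,a_{i,1}]_R$ of length $r_i\ge1$, such that: (i) $r_1\ge\dots\ge r_n$; (ii) if $r_i=r_{i+1}$ then $a_{i,1}\ge a_{i+1,1}$; (iii) $a\ge a_{1,r_1}\ge\dots\ge a_{1,2}\ge a_{2,r_2}\ge\dots\ge a_{2,2}\ge\dots\ge a_{n,r_n}\ge\dots\ge a_{n,2}$; (iv) among the letters of the chain in (iii), any two in different positions that both lie in $X_1$ are distinct; (v) if $a_{i,1},a_{i+1,1}\in X_1$ and $r_i=r_{i+1}$ then $a_{i,1}\ne a_{i+1,1}$. $\mathrm{Tab}_s(X)$ is the set of all GDN supertableaux. *)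

(* Defs.v *)
From HB Require Import structures.
From mathcomp Require Import all_boot all_order all_algebra.
Set Implicit Arguments. Unset Strict Implicit. Unset Printing Implicit Defensive.
Import Order.TTheory GRing.Theory.

Inductive term (X : Type) := Letter of X | Prod of term X & term X.
Arguments Letter {X}. Arguments Prod {X}.

Fixpoint tlen {X} (t : term X) : nat :=
  match t with Letter _ => 1 | Prod u v => tlen u + tlen v end.

Fixpoint troot {X} (t : term X) : nat :=
  match t with
  | Letter _ => 0
  | Prod u v => match v with Letter _ => (troot u).+1 | _ => troot u + troot v end
  end.

Fixpoint simple_term {X} (h : X) (t : seq X) : term X :=
  match t with [::] => Letter h | h' :: t' => Prod (Letter h) (simple_term h' t') end.

(* [a, mu_1, ..., mu_n]_L where mu_i = simple_term p_i.1 p_i.2, i.e. the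
   letters of mu_i, read left to right, are p_i.1 :: p_i.2
   = a_{i,r_i}, ..., a_{i,1}. *)
Definition tab_term {X} (a : X) (ls : seq (X * seq X)) : term X :=
  foldl (fun acc p => Prod acc (simple_term p.1 p.2)) (Letter a) ls.

Section Tab.
Context {d : Order.disp_t} {X : orderType d} (par : X -> bool).

(* conditions (ii),(v) plus (i) for consecutive simple terms *)
Definition tab_rel (p q : X * seq X) : bool :=
  (size q.2 <= size p.2)%N &&
  ((size p.2 == size q.2) ==>
     ((last q.1 q.2 <= last p.1 p.2)%O &&
      ~~ [&& par (last p.1 p.2), par (last q.1 q.2) & last p.1 p.2 == last q.1 q.2])).

(* chain of (iii): a, a_{1,r_1}, ..., a_{1,2}, a_{2,r_2}, ..., a_{n,2} *)
Definition tab_chain (a : X) (ls : seq (X * seq X)) : seq X :=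
  a :: flatten [seq belast p.1 p.2 | p <- ls].

Definition tab_cond (a : X) (ls : seq (X * seq X)) : bool :=
  [&& sorted (fun x y => (y <= x)%O) (tab_chain a ls),
      uniq (filter par (tab_chain a ls)) &
      sorted tab_rel ls].

(* GDN supertableau (par x = true means x \in X_1) *)
Definition is_tableau (t : term X) : Prop :=
  exists a ls, t = tab_term a ls /\ tab_cond a ls.
End Tab.

Definition sgn {k : pzRingType} (b : bool) : k := if b then (-1)%R else 1%R.

Definition is_GDN_super (k : fieldType) (A : lmodType k) (mul : A -> A -> A)
  (Apar : bool -> pred A) : Prop :=
  ((forall a x y z, mul (a *: x + y) z = a *: mul x z + mul y z)%R /\
   (forall a x y z, mul z (a *: x + y) = a *: mul z x + mul z y)%R) /\
  ((forall b, Apar b 0%R) /\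
   (forall b a x y, Apar b x -> Apar b y -> Apar b (a *: x + y)%R) /\
   (forall x, exists x0 x1, [/\ Apar false x0, Apar true x1 & x = (x0 + x1)%R]) /\
   (forall x, Apar false x -> Apar true x -> x = 0%R) /\
   (forall b c x y, Apar b x -> Apar c y -> Apar (b (+) c) (mul x y))) /\
  ((forall b c e x y z, Apar b x -> Apar c y -> Apar e z ->
      (mul x (mul y z) - mul (mul x y) z =
       sgn (b && c) *: (mul y (mul x z) - mul (mul y x) z))%R) /\
   (forall b c e x y z, Apar b x -> Apar c y -> Apar e z ->
      mul (mul x y) z = (sgn (c && e) *: mul (mul x z) y)%R)).

Fixpoint teval {X} {A : Type} (mul : A -> A -> A) (f : X -> A) (t : term X) : A :=
  match t with Letter x => f x | Prod u v => mul (teval mul f u) (teval mul f v) end.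

(* Main.v *)
Require Import Defs.
From HB Require Import structures.
From mathcomp Require Import all_boot all_order all_algebra.
From mathcomp Require Import zify.
From Stdlib Require Import Btauto.
Import Order.TTheory GRing.Theory.
Set Implicit Arguments. Unset Strict Implicit. Unset Printing Implicit Defensive.
Local Open Scope ring_scope.

Section Main.
Variables (k : fieldType) (disp : Order.disp_t) (X : orderType disp) (par : X -> bool).

Lemma sgnD (b c : bool) : sgn (b (+) c) = sgn b * sgn c :> k.
Proof. by case: b; case: c; rewrite /sgn /= ?mulN1r ?opprK ?mul1r ?mulr1. Qed.
Lemma sgnK (b : bool) : sgn b * sgn b = 1 :> k.
Proof. by rewrite -sgnD addbb. Qed.
Lemma sgn_neq0 (b : bool) : sgn b != 0 :> k.
Proof. by case: b; rewrite /sgn ?oppr_eq0 oner_eq0. Qed.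

Fixpoint tpar (t : term X) : bool :=
  match t with Letter x => par x | Prod u v => tpar u (+) tpar v end.

Definition models (A : lmodType k) (mul : A -> A -> A) (Apar : bool -> pred A) (f : X -> A) :=
  is_GDN_super mul Apar /\ forall x, Apar (par x) (f x).

Section Alg.
Variables (A : lmodType k) (mul : A -> A -> A) (Apar : bool -> pred A) (f : X -> A).
Hypothesis M : models mul Apar f.

Lemma dbl0 (x : A) : x = x + x -> x = 0.
Proof. by move/(congr1 (fun y => y - x)); rewrite addrK subrr. Qed.
Lemma mul0l z : mul 0 z = 0.
Proof.
case: M => [[[L _] _] _]; apply: dbl0.
have H := L 1 0 0 z; rewrite scale1r addr0 scale1r in H; exact: H.
Qed.
Lemma mul0r z : mul z 0 = 0.
Proof.
case: M => [[[_ R] _] _]; apply: dbl0.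
have H := R 1 0 0 z; rewrite scale1r addr0 scale1r in H; exact: H.
Qed.
Lemma mulDl x y z : mul (x + y) z = mul x z + mul y z.
Proof. case: M => [[[L _] _] _]; by have := L 1 x y z; rewrite !scale1r. Qed.
Lemma mulZl a x z : mul (a *: x) z = a *: mul x z.
Proof. case: M => [[[L _] _] _]; by have := L a x 0 z; rewrite !addr0 mul0l addr0. Qed.
Lemma mulDr x y z : mul z (x + y) = mul z x + mul z y.
Proof. case: M => [[[_ R] _] _]; by have := R 1 x y z; rewrite !scale1r. Qed.
Lemma mulZr a x z : mul z (a *: x) = a *: mul z x.
Proof. case: M => [[[_ R] _] _]; by have := R a x 0 z; rewrite !addr0 mul0r addr0. Qed.

Lemma tevalP t : Apar (tpar t) (teval mul f t).
Proof.
case: M => [[_ [[_ [_ [_ [_ Pm]]]] _]] hf].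
elim: t => [x|u IHu v IHv] //=; exact: Pm.
Qed.

Lemma RC_t u v w : teval mul f (Prod (Prod u v) w) =
  sgn (tpar v && tpar w) *: teval mul f (Prod (Prod u w) v).
Proof.
case: M => [[_ [_ [_ RC]]] _] /=.
exact: RC (tevalP u) (tevalP v) (tevalP w).
Qed.

Lemma LS_t u v w : teval mul f (Prod u (Prod v w)) - teval mul f (Prod (Prod u v) w) =
  sgn (tpar u && tpar v) *: (teval mul f (Prod v (Prod u w)) - teval mul f (Prod (Prod v u) w)).
Proof.
case: M => [[_ [_ [LS _]]] _] /=.
exact: LS (tevalP u) (tevalP v) (tevalP w).
Qed.
End Alg.

Definition evE (A : lmodType k) (mul : A -> A -> A) (f : X -> A) (e : seq (k * term X)) : A :=
  \sum_(p <- e) p.1 *: teval mul f p.2.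

Lemma evE_nil (A : lmodType k) mul f : @evE A mul f [::] = 0.
Proof. by rewrite /evE big_nil. Qed.
Lemma evE_cons (A : lmodType k) mul f p e : @evE A mul f (p :: e) = p.1 *: teval mul f p.2 + evE mul f e.
Proof. by rewrite /evE big_cons. Qed.
Lemma evE_cat (A : lmodType k) mul f e1 e2 : @evE A mul f (e1 ++ e2) = evE mul f e1 + evE mul f e2.
Proof. by rewrite /evE big_cat. Qed.

Definition scaleE (c : k) (e : seq (k * term X)) := [seq (c * p.1, p.2) | p <- e].
Lemma evE_scale (A : lmodType k) mul f c e : @evE A mul f (scaleE c e) = c *: evE mul f e.
Proof.
elim: e => [|p e IH]; first by rewrite /= !evE_nil scaler0.
by rewrite /= !evE_cons IH scalerDr scalerA.
Qed.

Definition eqv (e1 e2 : seq (k * term X)) :=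
  forall (A : lmodType k) mul Apar f, @models A mul Apar f -> evE mul f e1 = evE mul f e2.

Fixpoint allP (P : term X -> Prop) (e : seq (k * term X)) : Prop :=
  match e with [::] => True | p :: e' => P p.2 /\ allP P e' end.

Lemma allP_cat P e1 e2 : allP P e1 -> allP P e2 -> allP P (e1 ++ e2).
Proof. by elim: e1 => //= p e1 IH [? ?] ?; split => //; apply: IH. Qed.
Lemma allP_scale P c e : allP P e -> allP P (scaleE c e).
Proof. by elim: e => //= p e IH [? ?]; split => //; apply: IH. Qed.
Lemma allP_mono (P Q : term X -> Prop) e : (forall u, P u -> Q u) -> allP P e -> allP Q e.
Proof. by move=> H; elim: e => //= p e IH [? ?]; split; [apply: H|apply: IH]. Qed.

Definition inspan (P : term X -> Prop) (e : seq (k * term X)) :=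
  exists e', allP P e' /\ eqv e e'.

Lemma inspan_nil P : inspan P [::].
Proof. by exists [::]. Qed.
Lemma inspan_cat P e1 e2 : inspan P e1 -> inspan P e2 -> inspan P (e1 ++ e2).
Proof.
move=> [e1' [H1 E1]] [e2' [H2 E2]]; exists (e1' ++ e2'); split; first exact: allP_cat.
by move=> A mul Apar f M; rewrite !evE_cat (E1 _ _ _ _ M) (E2 _ _ _ _ M).
Qed.
Lemma inspan_scale P c e : inspan P e -> inspan P (scaleE c e).
Proof.
move=> [e' [H E]]; exists (scaleE c e'); split; first exact: allP_scale.
by move=> A mul Apar f M; rewrite !evE_scale (E _ _ _ _ M).
Qed.
Lemma inspan_eqv P e e' : eqv e e' -> inspan P e' -> inspan P e.
Proof.
move=> E [e'' [H E']]; exists e''; split => // A mul Apar f M.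
by rewrite (E _ _ _ _ M) (E' _ _ _ _ M).
Qed.
Lemma inspan_mono (P Q : term X -> Prop) e : (forall u, P u -> Q u) -> inspan P e -> inspan Q e.
Proof. move=> H [e' [H1 E]]; exists e'; split => //; exact: allP_mono H1. Qed.
Lemma inspan_single (P : term X -> Prop) t : P t -> inspan P [:: (1, t)].
Proof. by move=> Pt; exists [:: (1, t)]. Qed.

Lemma inspan_trans (P Q : term X -> Prop) e :
  inspan P e -> (forall u, P u -> inspan Q [:: (1, u)]) -> inspan Q e.
Proof.
move=> [e' [H E]] HPQ; apply: (inspan_eqv E) => {E e}.
elim: e' H => [|p e IH] /=; first by move=> _; exact: inspan_nil.
move=> [Pp He]; have -> : p :: e = [:: p] ++ e by [].
apply: inspan_cat; last exact: IH.
have := inspan_scale p.1 (HPQ _ Pp); apply: inspan_eqv.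
by move=> A mul Apar f M; rewrite /= !evE_cons !evE_nil mulr1.
Qed.



Definition rel (P : term X -> Prop) (t : term X) (c : k) (t' : term X) :=
  inspan P [:: (1, t); (- c, t')].

Lemma ev2 (A : lmodType k) mul f a t b t' :
  @evE A mul f [:: (a, t); (b, t')] = a *: teval mul f t + b *: teval mul f t'.
Proof. by rewrite !evE_cons evE_nil addr0. Qed.
Lemma ev1 (A : lmodType k) mul f a t :
  @evE A mul f [:: (a, t)] = a *: teval mul f t.
Proof. by rewrite !evE_cons evE_nil addr0. Qed.

Lemma rel_exact P t c t' :
  (forall (A : lmodType k) mul Apar f, @models A mul Apar f ->
     teval mul f t = c *: teval mul f t') -> rel P t c t'.
Proof.
move=> H; apply: (@inspan_eqv _ _ [::]); last exact: inspan_nil.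
by move=> A mul Apar f M; rewrite ev2 evE_nil (H _ _ _ _ M) scale1r scaleNr subrr.
Qed.

Lemma rel_mono (P Q : term X -> Prop) t c t' : (forall u, P u -> Q u) -> rel P t c t' -> rel Q t c t'.
Proof. exact: inspan_mono. Qed.

Lemma rel_trans P t c t' d t'' : rel P t c t' -> rel P t' d t'' -> rel P t (c * d) t''.
Proof.
move=> H1 H2; have := inspan_cat H1 (inspan_scale c H2); apply: inspan_eqv.
move=> A mul Apar f M; rewrite evE_cat /= ev2 ev2 ev2 !scale1r mulr1.
by rewrite mulrN -addrA (scaleNr c) addKr.
Qed.

Lemma rel_sym P t c t' : c != 0 -> rel P t c t' -> rel P t' c^-1 t.
Proof.
move=> c0 H; have := inspan_scale (- c^-1) H; apply: inspan_eqv.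
move=> A mul Apar f M; rewrite /= ev2 ev2 mulr1 mulrN mulNr opprK mulVf //.
by rewrite scale1r addrC.
Qed.

Lemma rel_zero P t c t' : rel P t c t' -> inspan P [:: (1, t')] -> inspan P [:: (1, t)].
Proof.
move=> H1 H2; have := inspan_cat H1 (inspan_scale c H2); apply: inspan_eqv.
move=> A mul Apar f M; rewrite evE_cat /= ev2 ev1 ev1 mulr1.
by rewrite scaleNr addrNK.
Qed.

Lemma rel_two P t c t' : (2%:R : k) != 0 -> rel P t c t' -> rel P t (- c) t' ->
  inspan P [:: (1, t)].
Proof.
move=> h2 H1 H2; have := inspan_scale (2%:R^-1) (inspan_cat H1 H2); apply: inspan_eqv.
move=> A mul Apar f M; rewrite /= !evE_cons evE_nil !addr0 !mulr1 !mulrN opprK.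
have E (a b : A) : a + (- b + (a + b)) = a + a.
  by rewrite (addrC a b) addKr.
rewrite /= scaleNr E -scalerDl scale1r.
have h : (2%:R^-1 : k) *+ 2 = 1.
  by rewrite -(mulr_natl (2%:R^-1 : k) 2) mulfV.
by rewrite -mulr2n h scale1r.
Qed.

Lemma rel_refl P t : rel P t 1 t.
Proof. by apply: rel_exact => *; rewrite scale1r. Qed.

Definition simp (t : seq X) (l : X) : term X :=
  foldr (fun x acc => Prod (Letter x) acc) (Letter l) t.
Definition lnsT (y : term X) (bs : seq (seq X * X)) : term X :=
  foldl (fun acc b => Prod acc (simp b.1 b.2)) y bs.
Definition lns (a : X) bs := lnsT (Letter a) bs.

Lemma lnsT_cat y bs1 bs2 : lnsT y (bs1 ++ bs2) = lnsT (lnsT y bs1) bs2.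
Proof. exact: foldl_cat. Qed.
Lemma lnsT_cons y b bs : lnsT y (b :: bs) = lnsT (Prod y (simp b.1 b.2)) bs.
Proof. by []. Qed.

Definition rr (u : term X) : nat := if u is Letter _ then 1 else troot u.
Lemma troot_Prod (u v : term X) : troot (Prod u v) = (troot u + rr v)%N.
Proof. by case: v => [x|? ?] /=; rewrite ?addn1. Qed.
Lemma rr_ge (u : term X) : (troot u <= rr u)%N.
Proof. by case: u. Qed.
Lemma tlen_gt0 (u : term X) : (0 < tlen u)%N.
Proof. by elim: u => //= u IH v _; rewrite addn_gt0 IH. Qed.
Lemma tlen1 (u : term X) : tlen u = 1%N -> troot u = 0%N.
Proof. case: u => //= u v; have := tlen_gt0 u; have := tlen_gt0 v; lia. Qed.

Lemma tlen_simp t l : tlen (simp t l) = (size t).+1.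
Proof. by elim: t => //= x t ->. Qed.
Lemma rr_simp t l : rr (simp t l) = 1%N.
Proof. case: t => // x t /=; elim: t x => //= y t IH x; by rewrite troot_Prod IH. Qed.

Definition lenbs (bs : seq (seq X * X)) := sumn [seq (size b.1).+1 | b <- bs].
Lemma troot_lnsT y bs : troot (lnsT y bs) = (troot y + size bs)%N.
Proof.
elim: bs y => [|b bs IH] y /=; first by rewrite addn0.
by rewrite IH troot_Prod rr_simp; lia.
Qed.
Lemma tlen_lnsT y bs : tlen (lnsT y bs) = (tlen y + lenbs bs)%N.
Proof.
elim: bs y => [|b bs IH] y /=; first by rewrite /lenbs addn0.
by rewrite IH /= tlen_simp /lenbs /=; lia.
Qed.

Definition plist (s : seq X) : bool := foldr (fun x b => par x (+) b) false s.
Lemma plist_cat s1 s2 : plist (s1 ++ s2) = plist s1 (+) plist s2.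
Proof. by elim: s1 => //= x s IH; rewrite IH addbA. Qed.
Definition bpar (b : seq X * X) := plist b.1 (+) par b.2.
Lemma tpar_simp t l : tpar (simp t l) = plist t (+) par l.
Proof. by elim: t => //= x t ->; rewrite addbA. Qed.

Definition Hp (N n : nat) (u : term X) := tlen u = N /\ (n < troot u)%N.

Definition mapL w (e : seq (k * term X)) := [seq (p.1, Prod p.2 w) | p <- e].
Definition mapR w (e : seq (k * term X)) := [seq (p.1, Prod w p.2) | p <- e].

Lemma evE_mapL (A : lmodType k) mul Apar f w e : @models A mul Apar f ->
  evE mul f (mapL w e) = mul (evE mul f e) (teval mul f w).
Proof.
move=> M; elim: e => [|p e IH] /=; first by rewrite !evE_nil (mul0l M).
by rewrite !evE_cons IH (mulDl M) (mulZl M).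
Qed.
Lemma evE_mapR (A : lmodType k) mul Apar f w e : @models A mul Apar f ->
  evE mul f (mapR w e) = mul (teval mul f w) (evE mul f e).
Proof.
move=> M; elim: e => [|p e IH] /=; first by rewrite !evE_nil (mul0r M).
by rewrite !evE_cons IH (mulDr M) (mulZr M).
Qed.

Lemma inspan_mapL (P Q : term X -> Prop) w e : (forall v, P v -> Q (Prod v w)) ->
  inspan P e -> inspan Q (mapL w e).
Proof.
move=> PQ [e' [H E]]; exists (mapL w e'); split.
  by elim: e' H {E} => //= p e' IH [? ?]; split; [apply: PQ| apply: IH].
by move=> A mul Apar f M; rewrite !(evE_mapL _ _ M) (E _ _ _ _ M).
Qed.
Lemma inspan_mapR (P Q : term X -> Prop) w e : (forall v, P v -> Q (Prod w v)) ->
  inspan P e -> inspan Q (mapR w e).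
Proof.
move=> PQ [e' [H E]]; exists (mapR w e'); split.
  by elim: e' H {E} => //= p e' IH [? ?]; split; [apply: PQ| apply: IH].
by move=> A mul Apar f M; rewrite !(evE_mapR _ _ M) (E _ _ _ _ M).
Qed.

Lemma rel_ctxL N n t c t' w : rel (Hp N n) t c t' ->
  rel (Hp (N + tlen w) (n + rr w)) (Prod t w) c (Prod t' w).
Proof.
apply: (inspan_mapL (w := w) (e := [:: (1, t); (-c, t')])).
move=> v [Hl Hr]; split; first by rewrite /= Hl.
by rewrite troot_Prod ltn_add2r.
Qed.
Lemma rel_ctxR N n t c t' w : rel (Hp N n) t c t' ->
  rel (Hp (tlen w + N) (troot w + n)) (Prod w t) c (Prod w t').
Proof.
apply: (inspan_mapR (w := w) (e := [:: (1, t); (-c, t')])).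
move=> v [Hl Hr]; split; first by rewrite /= Hl.
rewrite troot_Prod ltn_add2l; exact: leq_trans Hr (rr_ge v).
Qed.
Lemma rel_lnsT N n t c t' bs : rel (Hp N n) t c t' ->
  rel (Hp (N + lenbs bs) (n + size bs)) (lnsT t bs) c (lnsT t' bs).
Proof.
elim: bs N n t t' => [|b bs IH] N n t t' H /=.
  by apply: rel_mono H => u; rewrite /lenbs /= !addn0.
have := IH _ _ _ _ (rel_ctxL (simp b.1 b.2) H).
apply: rel_mono => u [H1 H2]; split.
  by rewrite H1 tlen_simp /lenbs /=; lia.
by rewrite rr_simp in H2; lia.
Qed.

Lemma teval_lnsT_scale (A : lmodType k) mul Apar f (M : @models A mul Apar f) t t' c bs :
  teval mul f t = c *: teval mul f t' -> teval mul f (lnsT t bs) = c *: teval mul f (lnsT t' bs).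
Proof.
elim: bs t t' => [|b bs IH] t t' H //=.
by apply: IH; rewrite /= H (mulZl M).
Qed.

Lemma RC_blocks y bs1 b1 b2 bs2 (A : lmodType k) mul Apar f : @models A mul Apar f ->
  teval mul f (lnsT y (bs1 ++ b1 :: b2 :: bs2)) =
  sgn (bpar b1 && bpar b2) *: teval mul f (lnsT y (bs1 ++ b2 :: b1 :: bs2)).
Proof.
move=> M; rewrite !lnsT_cat /=; apply: (teval_lnsT_scale M).
by rewrite (RC_t M) !tpar_simp.
Qed.

Lemma LS_rel b c w :
  rel (Hp (2 + tlen w) (rr w)) (Prod (Letter b) (Prod (Letter c) w)) (sgn (par b && par c))
      (Prod (Letter c) (Prod (Letter b) w)).
Proof.
apply: (@inspan_eqv _ _ [:: (1, Prod (Prod (Letter b) (Letter c)) w);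
    (- sgn (par b && par c), Prod (Prod (Letter c) (Letter b)) w)]).
  move=> A mul Apar f M; rewrite !ev2 !scale1r !scaleNr.
  have := LS_t M (Letter b) (Letter c) w; rewrite /= scalerBr => H.
  have gen (x y u v : A) : x - y = u - v -> x - u = y - v.
    move=> E; rewrite -[x](subrK y) E addrAC [u - v - u]addrAC subrr add0r.
    by rewrite addrC.
  rewrite /=; exact: gen.
have hr : (rr w < troot (Prod (Prod (Letter b) (Letter c)) w))%N by rewrite troot_Prod.
have hr' : (rr w < troot (Prod (Prod (Letter c) (Letter b)) w))%N by rewrite troot_Prod.
by exists [:: (1, Prod (Prod (Letter b) (Letter c)) w);
    (- sgn (par b && par c), Prod (Prod (Letter c) (Letter b)) w)]; split => //=;
  rewrite /Hp /= ?addnA.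
Qed.

Definition keyb (b : seq X * X) : nat * X := (size b.1, b.2).
Fixpoint mkbs (c : seq X) (K : seq (nat * X)) : seq (seq X * X) :=
  match K with
  | [::] => [::]
  | p :: K' => (take p.1 c, p.2) :: mkbs (drop p.1 c) K'
  end.
Definition chainbs (bs : seq (seq X * X)) := flatten [seq b.1 | b <- bs].

Lemma mkbs_chain bs : mkbs (chainbs bs) (map keyb bs) = bs.
Proof.
elim: bs => //= b bs IH; rewrite /chainbs /= take_size_cat // drop_size_cat //.
by rewrite IH; case: b.
Qed.
Lemma chain_mkbs c K : size c = sumn (map fst K) -> chainbs (mkbs c K) = c.
Proof.
elim: K c => [|p K IH] c /=; first by case: c.
move=> Hs; rewrite /chainbs /= -/(chainbs _) IH ?cat_take_drop // size_drop Hs; lia.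
Qed.
Lemma keys_mkbs c K : size c = sumn (map fst K) -> map keyb (mkbs c K) = K.
Proof.
elim: K c => [|p K IH] c //= Hs; rewrite IH; last by rewrite size_drop Hs; lia.
rewrite /keyb /= size_take_min; case: p Hs => s l /= Hs.
by have /minn_idPl -> : (s <= size c)%N by lia.
Qed.
Lemma size_mkbs c K : size (mkbs c K) = size K.
Proof. by elim: K c => //= p K IH c; rewrite IH. Qed.
Lemma lenbs_keys bs : lenbs bs = sumn [seq p.1.+1 | p <- map keyb bs].
Proof. by rewrite /lenbs -map_comp. Qed.
Lemma lenbs_cat bs1 bs2 : lenbs (bs1 ++ bs2) = (lenbs bs1 + lenbs bs2)%N.
Proof. by rewrite /lenbs map_cat sumn_cat. Qed.

Definition HB (bs : seq (seq X * X)) := Hp (1 + lenbs bs)%N (size bs).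

Lemma tlen_lns a bs : tlen (lns a bs) = (1 + lenbs bs)%N.
Proof. by rewrite /lns tlen_lnsT. Qed.
Lemma troot_lns a bs : troot (lns a bs) = size bs.
Proof. by rewrite /lns troot_lnsT. Qed.

Lemma rel_HpE N n N' n' t c t' : N = N' -> n = n' -> rel (Hp N n) t c t' -> rel (Hp N' n') t c t'.
Proof. by move=> -> ->. Qed.

Lemma simp_cat q s l : simp (q ++ s) l = foldr (fun x acc => Prod (Letter x) acc) (simp s l) q.
Proof. exact: foldr_cat. Qed.

Lemma rel_simp_swap q b c r l :
  rel (Hp (size q + (3 + size r)) 1) (simp (q ++ b :: c :: r) l) (sgn (par b && par c))
      (simp (q ++ c :: b :: r) l).
Proof.
rewrite !simp_cat; elim: q => [|x q IH] /=.
  by have := LS_rel b c (simp r l); rewrite rr_simp tlen_simp; apply: rel_HpE => //; lia.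
by have := rel_ctxR (Letter x) IH; apply: rel_HpE => //=; lia.
Qed.

Lemma M_W a bs1 q b c r l bs2 :
  rel (HB (bs1 ++ (q ++ b :: c :: r, l) :: bs2)) (lns a (bs1 ++ (q ++ b :: c :: r, l) :: bs2))
      (sgn (par b && par c)) (lns a (bs1 ++ (q ++ c :: b :: r, l) :: bs2)).
Proof.
have := rel_lnsT bs2 (rel_ctxR (lns a bs1) (rel_simp_swap q b c r l)).
rewrite /lns !lnsT_cat /=; apply: rel_HpE.
  by rewrite tlen_lnsT lenbs_cat /lenbs /= size_cat /=; lia.
by rewrite troot_lnsT size_cat /=; lia.
Qed.

Lemma M_T2 a z t l bs :
  rel (HB ((z :: t, l) :: bs)) (lns a ((z :: t, l) :: bs)) (sgn (par a && par z))
      (lns z ((a :: t, l) :: bs)).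
Proof.
have := rel_lnsT bs (LS_rel a z (simp t l)).
rewrite /lns /=; apply: rel_HpE.
  by rewrite tlen_simp /lenbs /=; lia.
by rewrite rr_simp /=; lia.
Qed.

Lemma sgnV (b : bool) : (sgn b)^-1 = sgn b :> k.
Proof. by case: b; rewrite /sgn ?invrN invr1. Qed.

Lemma M_Wmove a bs1 q x r l bs2 :
  rel (HB (bs1 ++ (q ++ x :: r, l) :: bs2)) (lns a (bs1 ++ (q ++ x :: r, l) :: bs2))
      (sgn (par x && plist q)) (lns a (bs1 ++ (x :: q ++ r, l) :: bs2)).
Proof.
elim/last_ind: q r => [|q y IH] r.
  by rewrite /= andbF; exact: rel_refl.
have E1 : rcons q y ++ x :: r = q ++ y :: x :: r by rewrite cat_rcons.
have E2 : x :: rcons q y ++ r = x :: q ++ y :: r by rewrite cat_rcons.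
rewrite E1 E2.
have H1 := M_W a bs1 q y x r l bs2.
have H2 := IH (y :: r).
have HBE : HB (bs1 ++ (q ++ x :: y :: r, l) :: bs2) = HB (bs1 ++ (q ++ y :: x :: r, l) :: bs2).
  by rewrite /HB !lenbs_cat /lenbs /= !size_cat /=.
rewrite HBE in H2; have := rel_trans H1 H2.
rewrite -sgnD; congr (rel _ _ (sgn _) _).
by rewrite -cats1 plist_cat /= addbF; case: (par x); case: (par y); case: (plist q).
Qed.

Lemma addbX (b c : bool) : b (+) c = xorb b c. Proof. by case: b; case: c. Qed.

Definition exq (t : term X) (c : k) (t' : term X) :=
  forall (A : lmodType k) mul Apar f, @models A mul Apar f ->
     teval mul f t = c *: teval mul f t'.

Lemma exq_trans t c t' d t'' : exq t c t' -> exq t' d t'' -> exq t (c * d) t''.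
Proof. by move=> H1 H2 A mul Apar f M; rewrite (H1 _ _ _ _ M) (H2 _ _ _ _ M) scalerA. Qed.
Lemma exq_sym t c t' : c != 0 -> exq t c t' -> exq t' c^-1 t.
Proof. by move=> c0 H A mul Apar f M; rewrite (H _ _ _ _ M) scalerA mulVf // scale1r. Qed.
Lemma exq_refl t : exq t 1 t.
Proof. by move=> *; rewrite scale1r. Qed.

Definition plb (bs : seq (seq X * X)) := foldr (fun b acc => bpar b (+) acc) false bs.
Lemma plb_cat bs1 bs2 : plb (bs1 ++ bs2) = plb bs1 (+) plb bs2.
Proof. by elim: bs1 => //= b bs IH; rewrite IH addbA. Qed.

Lemma blk_front y bs1 b bs2 :
  exq (lnsT y (bs1 ++ b :: bs2)) (sgn (bpar b && plb bs1)) (lnsT y (b :: bs1 ++ bs2)).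
Proof.
elim: bs1 y => [|b1 bs1 IH] y /=; first by rewrite andbF; exact: exq_refl.
have H1 := IH (Prod y (simp b1.1 b1.2)).
have H2 : exq (lnsT y (b1 :: b :: bs1 ++ bs2)) (sgn (bpar b1 && bpar b))
              (lnsT y (b :: b1 :: bs1 ++ bs2)).
  by move=> A mul Apar f M; have := RC_blocks y [::] b1 b (bs1 ++ bs2) M.
have := exq_trans H1 H2; rewrite -sgnD.
by congr (exq _ (sgn _) _); rewrite !addbX; btauto.
Qed.

Lemma blk_perm y bs bs' : perm_eq bs bs' -> exists c, exq (lnsT y bs) c (lnsT y bs').
Proof.
elim: bs y bs' => [|b bs IH] y bs'.
  by rewrite perm_sym => /perm_nilP ->; exists 1; exact: exq_refl.
move=> Hp; have Hin : b \in bs' by rewrite -(perm_mem Hp) mem_head.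
move: Hp; case/splitPr: Hin => bs1 bs2 Hp.
have Hp' : perm_eq bs (bs1 ++ bs2).
  by rewrite -(perm_cons b); apply: (perm_trans Hp); rewrite -cat1s perm_catCA.
have [c Hc] := IH (Prod y (simp b.1 b.2)) _ Hp'.
exists (c * (sgn (bpar b && plb bs1))^-1).
apply: exq_trans Hc _; apply: exq_sym; first by rewrite sgn_neq0.
exact: blk_front.
Qed.

Fixpoint swb (bs : seq (seq X * X)) : bool :=
  match bs with [::] => false | b :: bs' => (par b.2 && plist (chainbs bs')) (+) swb bs' end.

Definition Tc a c K := lns a (mkbs c K).
Definition HK (K : seq (nat * X)) := Hp (1 + sumn [seq p.1.+1 | p <- K])%N (size K).
Definition sw c K := swb (mkbs c K).

Lemma HB_mkbs c K : size c = sumn (map fst K) -> HB (mkbs c K) = HK K.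
Proof. by move=> Hs; rewrite /HB /HK lenbs_keys keys_mkbs // size_mkbs. Qed.

Lemma G0first a u x r l bs :
  rel (HB ((u ++ x :: r, l) :: bs)) (lns a ((u ++ x :: r, l) :: bs))
      (sgn ((par a && par x) (+) ((par a (+) par x) && plist u)))
      (lns x ((u ++ a :: r, l) :: bs)).
Proof.
have H1 := M_Wmove a [::] u x r l bs.
have H2 := M_T2 a x (u ++ r) l bs.
have H3 := rel_sym (sgn_neq0 _) (M_Wmove x [::] u a r l bs).
rewrite sgnV /= in H1 H3.
have E1 : HB ((x :: u ++ r, l) :: bs) = HB ((u ++ x :: r, l) :: bs).
  by rewrite /HB /lenbs /= !size_cat /= addnS.
have E2 : HB ((u ++ a :: r, l) :: bs) = HB ((u ++ x :: r, l) :: bs).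
  by rewrite /HB /lenbs /= !size_cat.
rewrite E1 in H2; rewrite E2 in H3.
have := rel_trans (rel_trans H1 H2) H3; rewrite -!sgnD.
by congr (rel _ _ (sgn _) _); rewrite !addbX; btauto.
Qed.


Definition pk (K : seq (nat * X)) := foldr (fun p acc => par p.2 (+) acc) false K.
Lemma plb_mkbs c K : size c = sumn (map fst K) -> plb (mkbs c K) = plist c (+) pk K.
Proof.
elim: K c => [|[s l] K IH] c /=; first by case: c.
move=> Hs; rewrite IH; last by rewrite size_drop Hs; lia.
rewrite /bpar /= -{3}(cat_take_drop s c) plist_cat.
by rewrite !addbX; btauto.
Qed.

Lemma mkbs_lt s l K u x v : (size u < s)%N ->
  mkbs (u ++ x :: v) ((s, l) :: K) =
  (u ++ x :: take (s - size u).-1 v, l) :: mkbs (drop (s - size u).-1 v) K.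
Proof.
move=> H /=; rewrite take_cat drop_cat ltnNge (ltnW H) /=.
by case E: (s - size u)%N => [|m]; [lia|].
Qed.
Lemma mkbs_ge s l K u x v : (s <= size u)%N ->
  mkbs (u ++ x :: v) ((s, l) :: K) =
  (take s u, l) :: mkbs (drop s u ++ x :: v) K.
Proof.
move=> H /=; rewrite take_cat drop_cat.
case: ltnP => H2 //; have -> : s = size u by lia.
by rewrite subnn take_size drop_size cats0.
Qed.

Lemma G0 K a u x v : size (u ++ x :: v) = sumn (map fst K) ->
  rel (HK K) (Tc a (u ++ x :: v) K)
    (sgn (sw (u ++ x :: v) K (+) ((par a && par x) (+) ((par a (+) par x) && plist u))
          (+) sw (u ++ a :: v) K))
    (Tc x (u ++ a :: v) K).
Proof.
elim: K u => [|[s l] K IH] u /= Hs; first by rewrite size_cat /= addnS in Hs.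
have Hs' : size (u ++ a :: v) = (s + sumn (map fst K))%N by rewrite !size_cat in Hs *.
rewrite -(HB_mkbs (c := u ++ x :: v) (K := (s, l) :: K)) //.
case: (ltnP (size u) s) => Hu.
  rewrite /Tc /sw !mkbs_lt //=.
  have := G0first a u x (take (s - size u).-1 v) l (mkbs (drop (s - size u).-1 v) K).
  by congr (rel _ _ (sgn _) _); rewrite !addbX; btauto.
rewrite /Tc /sw !mkbs_ge //=.
set u1 := take s u; set u' := drop s u.
have Hx : size (u' ++ x :: v) = sumn (map fst K) by rewrite size_cat /= size_drop; rewrite size_cat /= in Hs; lia.
have Ha : size (u' ++ a :: v) = sumn (map fst K) by rewrite !size_cat /= in Hx *.
have H := rel_lnsT [:: (u1, l)] (IH u' Hx).
set bsx := mkbs (u' ++ x :: v) K in H *; set bsa := mkbs (u' ++ a :: v) K in H *.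
have E1 := exq_sym (sgn_neq0 _) (blk_front (Letter a) bsx (u1, l) [::]).
have E2 := blk_front (Letter x) bsa (u1, l) [::].
rewrite !cats0 sgnV in E1 E2.
have HBE : HB ((u1, l) :: bsx) = Hp (1 + sumn [seq p.1.+1 | p <- K] + lenbs [:: (u1, l)])
             (size K + size [:: (u1, l)]).
  rewrite /HB /lenbs /= -/(lenbs bsx) lenbs_keys keys_mkbs // size_mkbs; congr Hp; lia.
rewrite HBE; rewrite /Tc /lns -!lnsT_cat in H.
have := rel_trans (rel_trans (rel_exact _ E1) H) (rel_exact _ E2).
rewrite -!sgnD.
congr (rel _ _ (sgn _) _).
rewrite /sw -/bsx -/bsa /bpar /=.
rewrite /bsx /bsa !plb_mkbs // !chain_mkbs //.
have -> : plist u = plist u1 (+) plist u' by rewrite -plist_cat cat_take_drop.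
rewrite !plist_cat /=.
move: (swb _) (swb _) (par a) (par x) (par l) (plist u1) (plist u') (plist v) (pk K).
move=> ? ? ? ? ? ? ? ? ?; rewrite !addbX; btauto.
Qed.


Section Chains.
Variables (x0 : X) (K : seq (nat * X)).

Definition TC (C : seq X) := Tc (head x0 C) (behead C) K.
Definition swC (C : seq X) := sw (behead C) K.
Definition relN C b C' := rel (HK K) (TC C) (sgn (swC C (+) b (+) swC C')) (TC C').
Definition valid (C : seq X) := size C = (sumn (map fst K)).+1.

Lemma relN_refl C : relN C false C.
Proof.
rewrite /relN; have -> : swC C (+) false (+) swC C = false by rewrite addbF addbb.
exact: rel_refl.
Qed.

Lemma relN_trans C b C' b' C'' : relN C b C' -> relN C' b' C'' -> relN C (b (+) b') C''.
Proof.
move=> H1 H2; have := rel_trans H1 H2; rewrite -sgnD /relN.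
by congr (rel _ _ (sgn _) _); move: (swC C) (swC C') (swC C'') => ? ? ?; rewrite !addbX; btauto.
Qed.

Lemma G0C a u x v : valid (a :: u ++ x :: v) ->
  relN (a :: u ++ x :: v) ((par a && par x) (+) ((par a (+) par x) && plist u)) (x :: u ++ a :: v).
Proof.
rewrite /valid /= => -[Hs]; have := G0 a Hs; rewrite /relN /TC /swC /=.
by congr (rel _ _ (sgn _) _); rewrite !addbA.
Qed.

Lemma CP u x z v : valid (u ++ x :: z :: v) ->
  relN (u ++ x :: z :: v) (par x && par z) (u ++ z :: x :: v).
Proof.
case: u => [|a u] Hv /=.
  by have := @G0C x [::] z v Hv; congr (relN _ _ _); rewrite /= andbF addbF.
have V1 : valid (x :: (u ++ [:: a]) ++ z :: v).
  by move: Hv; rewrite /valid /= ?size_cat /= ?size_cat /=; lia.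
have V2 : valid (z :: u ++ a :: x :: v) by move: Hv; rewrite /valid /= ?size_cat /= ?size_cat /=; lia.
have H1 := @G0C a u x (z :: v) Hv.
have H2 := @G0C x (u ++ [:: a]) z v V1.
have H3 := @G0C z u a (x :: v) V2.
rewrite -!catA /= in H2.
have := relN_trans (relN_trans H1 H2) H3.
congr (relN _ _ _); rewrite plist_cat /=.
by move: (par a) (par x) (par z) (plist u) => ? ? ? ?; rewrite !addbX; btauto.
Qed.

Lemma Kmove u x w v : valid (u ++ x :: w ++ v) ->
  relN (u ++ x :: w ++ v) (par x && plist w) (u ++ w ++ x :: v).
Proof.
elim: w u => [|y w IH] u Hv /=; first by rewrite andbF; exact: relN_refl.
have H1 := @CP u x y (w ++ v) Hv.
have V : valid ((u ++ [:: y]) ++ x :: w ++ v) by move: Hv; rewrite /valid ?size_cat /= ?size_cat /=; lia.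
have H2 := IH (u ++ [:: y]) V; rewrite -!catA /= in H2.
have := relN_trans H1 H2; congr (relN _ _ _).
by move: (par x) (par y) (plist w) => ? ? ?; rewrite !addbX; btauto.
Qed.

Lemma Kseg u w1 w2 v : valid (u ++ w1 ++ w2 ++ v) ->
  relN (u ++ w1 ++ w2 ++ v) (plist w1 && plist w2) (u ++ w2 ++ w1 ++ v).
Proof.
elim: w1 u => [|x w1 IH] u Hv /=; first by exact: relN_refl.
have V : valid ((u ++ [:: x]) ++ w1 ++ w2 ++ v) by move: Hv; rewrite /valid -catA.
have H1 := IH (u ++ [:: x]) V; rewrite -!catA /= in H1.
have V2 : valid (u ++ x :: w2 ++ w1 ++ v).
  by move: Hv; rewrite /valid ?size_cat /= ?size_cat /=; lia.
have H2 := @Kmove u x w2 (w1 ++ v) V2.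
have := relN_trans H1 H2; congr (relN _ _ _).
by move: (par x) (plist w1) (plist w2) => ? ? ?; rewrite !addbX; btauto.
Qed.

Lemma Kperm u C C' : valid (u ++ C) -> perm_eq C C' -> exists b, relN (u ++ C) b (u ++ C').
Proof.
elim: C u C' => [|x C IH] u C' Hv.
  by rewrite perm_sym => /perm_nilP ->; exists false; exact: relN_refl.
move=> Hp; have Hin : x \in C' by rewrite -(perm_mem Hp) mem_head.
move: Hp; case/splitPr: Hin => C1 C2 Hp.
have Hp' : perm_eq C (C1 ++ C2).
  by rewrite -(perm_cons x); apply: (perm_trans Hp); rewrite -cat1s perm_catCA.
have V : valid ((u ++ [:: x]) ++ C) by move: Hv; rewrite /valid -catA.
have [b Hb] := IH _ _ V Hp'; rewrite -!catA /= in Hb.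
have V2 : valid (u ++ x :: C1 ++ C2).
  by move: Hv; rewrite /valid ?size_cat /= ?size_cat (perm_size Hp') ?size_cat /=; lia.
have := relN_trans Hb (@Kmove u x C1 C2 V2).
by move=> H; eexists; exact: H.
Qed.

Lemma Kdup (char2 : (2%:R : k) != 0) u o w v : valid (u ++ o :: w ++ o :: v) -> par o ->
  inspan (HK K) [:: (1, TC (u ++ o :: w ++ o :: v))].
Proof.
move=> Hv Po.
have H1 := @Kmove u o w (o :: v) Hv.
have V2 : valid ((u ++ w) ++ o :: o :: v).
  by move: Hv; rewrite /valid ?size_cat /= ?size_cat /=; lia.
have H2 := @CP (u ++ w) o o v V2; rewrite -catA Po /= in H2.
apply: (rel_zero H1).
have H3 : rel (HK K) (TC (u ++ w ++ o :: o :: v)) (- 1) (TC (u ++ w ++ o :: o :: v)).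
  move: H2; rewrite /relN.
  by have -> : swC (u ++ w ++ [:: o, o & v]) (+) true (+) swC (u ++ w ++ [:: o, o & v]) = true
    by rewrite addbC addbA addbb.
apply: (rel_two char2 H3); rewrite opprK; exact: rel_refl.
Qed.

End Chains.


Lemma chainbs_cat bs1 bs2 : chainbs (bs1 ++ bs2) = chainbs bs1 ++ chainbs bs2.
Proof. by rewrite /chainbs map_cat flatten_cat. Qed.
Lemma size_chainbs bs : size (chainbs bs) = sumn (map fst (map keyb bs)).
Proof. by elim: bs => //= b bs IH; rewrite /chainbs /= size_cat -/(chainbs _) IH. Qed.

Definition pkb (bs : seq (seq X * X)) := foldr (fun b acc => par b.2 (+) acc) false bs.
Lemma swb_cat bs1 bs2 :
  swb (bs1 ++ bs2) = swb bs1 (+) (pkb bs1 && plist (chainbs bs2)) (+) swb bs2.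
Proof.
elim: bs1 => [|b bs1 IH] /=; first by rewrite ?addbF ?addFb.
rewrite IH chainbs_cat plist_cat.
by move: (par b.2) (plist (chainbs bs1)) (plist (chainbs bs2)) (swb bs1) (swb bs2) (pkb bs1) => *;
  rewrite !addbX; btauto.
Qed.

Lemma inspan_exq P t c t' : exq t c t' -> inspan P [:: (1, t')] -> inspan P [:: (1, t)].
Proof. by move=> E H; apply: (rel_zero _ H); apply: rel_exact; exact: E. Qed.

Lemma Lv (char2 : (2%:R : k) != 0) a bs1 t t' l bs2 : size t = size t' -> par l ->
  inspan (HB (bs1 ++ (t, l) :: (t', l) :: bs2)) [:: (1, lns a (bs1 ++ (t, l) :: (t', l) :: bs2))].
Proof.
move=> St Pl.
set bs := bs1 ++ _; set bs' := bs1 ++ (t', l) :: (t, l) :: bs2.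
set K := map keyb bs.
have EK : map keyb bs' = K by rewrite /K /bs !map_cat /= /keyb /= St.
have Vc : size (chainbs bs) = sumn (map fst K) by rewrite size_chainbs.
have Vc' : size (chainbs bs') = sumn (map fst K) by rewrite -EK size_chainbs.
have HBK : HB bs = HK K by rewrite -(HB_mkbs Vc) mkbs_chain.
have T1 : TC a K (a :: chainbs bs) = lns a bs by rewrite /TC /Tc /= mkbs_chain.
have T2 : TC a K (a :: chainbs bs') = lns a bs' by rewrite /TC /Tc /= -EK mkbs_chain.
have E1 : chainbs bs = chainbs bs1 ++ t ++ t' ++ chainbs bs2 by rewrite /bs chainbs_cat.
have E2 : chainbs bs' = chainbs bs1 ++ t' ++ t ++ chainbs bs2 by rewrite /bs' chainbs_cat.
have V : valid K ([:: a & chainbs bs1] ++ t ++ t' ++ chainbs bs2).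
  by rewrite /valid /= -E1 Vc.
have H1 := @Kseg a K [:: a & chainbs bs1] t t' (chainbs bs2) V.
rewrite /= -E1 -E2 in H1.
rewrite /relN T1 T2 /swC /= /sw !mkbs_chain -EK mkbs_chain in H1.
have H2 : rel (HB bs) (lns a bs) (sgn (bpar (t, l) && bpar (t', l))) (lns a bs').
  by apply: rel_exact => A mul Apar f M; rewrite /lns /bs /bs'; apply: RC_blocks M.
apply: (rel_two char2 H2); rewrite HBK -HBK.
have -> : - sgn (bpar (t, l) && bpar (t', l)) =
          sgn (swb bs (+) plist t && plist t' (+) swb bs') :> k.
  have swb_cons b bb : swb (b :: bb) = (par b.2 && plist (chainbs bb)) (+) swb bb by [].
  have ch_cons b bb : chainbs (b :: bb) = b.1 ++ chainbs bb by [].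
  rewrite /bs /bs' !swb_cat !swb_cons !ch_cons /bpar /= Pl.
  set A1 := swb bs1; set A2 := pkb bs1; set A3 := swb bs2; set A4 := chainbs bs2.
  have sN (b : bool) : - sgn b = sgn (~~ b) :> k by case: b; rewrite /sgn ?opprK.
  rewrite sN; congr sgn; rewrite !plist_cat.
  by move: A1 A2 A3 (plist A4) (plist t) (plist t') => *; rewrite !addbX; btauto.
by rewrite HBK -EK.
Qed.


Definition keyle (p q : nat * X) : bool := (q.1 < p.1)%N || ((q.1 == p.1) && (q.2 <= p.2)%O).
Definition bkle (b1 b2 : seq X * X) := keyle (keyb b1) (keyb b2).
Lemma bkle_total : total bkle.
Proof.
move=> b1 b2; rewrite /bkle /keyle /=.
case: (ltngtP (size b1.1) (size b2.1)) => //= _; exact: le_total.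
Qed.
Definition geX (x y : X) := (y <= x)%O.
Lemma geX_total : total geX.
Proof. by move=> x y; rewrite /geX orbC le_total. Qed.

Definition toP (b : seq X * X) : X * seq X :=
  match b.1 with [::] => (b.2, [::]) | x :: t => (x, rcons t b.2) end.
Lemma toP_size b : size (toP b).2 = size b.1.
Proof. by case: b => [[|x t] l] //=; rewrite size_rcons. Qed.
Lemma toP_last b : last (toP b).1 (toP b).2 = b.2.
Proof. by case: b => [[|x t] l] //=; rewrite last_rcons. Qed.
Lemma toP_belast b : belast (toP b).1 (toP b).2 = b.1.
Proof. by case: b => [[|x t] l] //=; rewrite belast_rcons. Qed.
Lemma toP_simple b : simple_term (toP b).1 (toP b).2 = simp b.1 b.2.
Proof.
case: b => [[|x t] l] //=; elim: t x => [|y t IH] x //=.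
by rewrite IH.
Qed.
Lemma tab_term_lns a bs : tab_term a (map toP bs) = lns a bs.
Proof.
rewrite /tab_term /lns; elim: bs (Letter a) => //= b bs IH y.
by rewrite toP_simple IH.
Qed.
Lemma tab_chain_toP a bs : tab_chain a (map toP bs) = a :: chainbs bs.
Proof.
rewrite /tab_chain; congr (_ :: _); rewrite /chainbs -map_comp.
by congr flatten; apply: eq_map => b /=; rewrite toP_belast.
Qed.

Definition TabP N n (v : term X) := is_tableau par v /\ tlen v = N /\ (n <= troot v)%N.

Lemma not_uniq_dec C : ~~ uniq (filter par C) -> exists u o w v, C = u ++ o :: w ++ o :: v /\ par o.
Proof.
elim: C => //= x C IH; case Px: (par x) => /=.
  case Hx: (x \in filter par C) => /=.
    move: Hx; rewrite mem_filter => /andP [_ /splitPr [w v]].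
    by exists [::], x, w, v.
  move/IH => [u [o [w [v [-> Po]]]]]; by exists (x :: u), o, w, v.
move/IH => [u [o [w [v [-> Po]]]]]; by exists (x :: u), o, w, v.
Qed.

Lemma not_sorted_dec (T : Type) (r : T -> T -> bool) s : ~~ sorted r s ->
  exists s1 x y s2, s = s1 ++ x :: y :: s2 /\ ~~ r x y.
Proof.
elim: s => //= x s IH; case: s IH => //= y s IH.
rewrite negb_and => /orP [H|H]; first by exists [::], x, y, s.
have [s1 [x' [y' [s2 [E H']]]]] := IH H.
by exists (x :: s1), x', y', s2; rewrite E.
Qed.

Lemma sorted_consec (T : Type) (r : T -> T -> bool) s1 x y s2 : sorted r (s1 ++ x :: y :: s2) -> r x y.
Proof.
elim: s1 => [|z s1 IH] /=; first by case/andP.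
case: s1 IH => [|w s1] IH /=; first by case/and3P.
by case/andP => _ H; apply: IH.
Qed.

Lemma partB (char2 : (2%:R : k) != 0) a bs :
  inspan (fun v => TabP (1 + lenbs bs) (size bs) v \/ HB bs v) [:: (1, lns a bs)].
Proof.
set P := fun v => _ \/ _.
set bs' := sort bkle bs.
have Hp : perm_eq bs bs' by rewrite /bs' perm_sym perm_sort.
have [c Ec] := blk_perm (Letter a) Hp.
apply: (inspan_exq Ec) => {c Ec}.
have Lb : lenbs bs' = lenbs bs by rewrite /lenbs; apply/perm_sumn/perm_map; rewrite perm_sym.
have Sb : size bs' = size bs by rewrite (perm_size Hp).
set K := map keyb bs'.
have HKP v : HK K v -> P v.
  move=> H; right; rewrite /HB -Lb -Sb lenbs_keys -/K.
  by have -> : size bs' = size K by rewrite size_map.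
have Vc : size (chainbs bs') = sumn (map fst K) by rewrite size_chainbs.
set C := a :: chainbs bs'.
have VC : valid K C by rewrite /valid /= Vc.
set C' := sort geX C.
have HpC : perm_eq C C' by rewrite /C' perm_sym perm_sort.
have [b Hb] := @Kperm a K [::] C C' VC HpC.
have TCC : TC a K C = lns a bs' by rewrite /TC /Tc /= mkbs_chain.
rewrite /relN /= TCC in Hb.
apply: (rel_zero (rel_mono HKP Hb)).
have VC' : valid K C' by rewrite /valid -(perm_size HpC).
case Hu: (uniq (filter par C')); last first.
  have [u [o [w [v [EC Po]]]]] := not_uniq_dec (negbT Hu).
  apply: (inspan_mono HKP); rewrite EC; apply: Kdup => //; by rewrite -EC.
case EC': C' VC' Hu => [|a' c'] VC' Hu; first by [].
have Vc' : size c' = sumn (map fst K) by move: VC'; rewrite /valid /= => -[].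
rewrite /TC /Tc /=.
set bs'' := mkbs c' K.
have Kb : map keyb bs'' = K by rewrite keys_mkbs.
have Cb : chainbs bs'' = c' by rewrite chain_mkbs.
case Hs: (sorted (fun b1 b2 => tab_rel par (toP b1) (toP b2)) bs'').
  apply: inspan_single; left; split; last split.
  - exists a', (map toP bs''); split; first by rewrite tab_term_lns.
    rewrite /tab_cond tab_chain_toP Cb Hu sorted_map Hs !andbT -EC'.
    exact: sort_sorted geX_total _.
  - by rewrite tlen_lns lenbs_keys Kb /K -lenbs_keys Lb.
  - by rewrite troot_lns size_mkbs size_map Sb.
have [B1 [b1 [b2 [B2 [EB Hn]]]]] := not_sorted_dec (negbT Hs).
have Hk : bkle b1 b2.
  have : sorted bkle bs''.
    have : sorted keyle (map keyb bs'').
      by rewrite Kb /K sorted_map; exact: sort_sorted bkle_total bs.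
    by rewrite sorted_map.
  by rewrite EB; apply: sorted_consec.
move: Hn Hk; rewrite /tab_rel /bkle /keyle !toP_size !toP_last /=.
case: b1 b2 EB => t l [t' l'] EB /=.
case: (ltngtP (size t') (size t)) => //= Ht.
move=> Hn Hl; move: Hn; rewrite Hl /= negbK => /and3P [Pl _ /eqP El].
subst l'.
have := @Lv char2 a' B1 t t' l B2 (esym Ht) Pl; rewrite -EB.
apply: inspan_mono => v Hv; right.
by rewrite /HB -Lb -Sb lenbs_keys -/K -Kb -lenbs_keys (_ : size bs' = size bs'') // size_mkbs size_map.
Qed.


Definition LNSP N rho (u : term X) :=
  (exists a bs, u = lns a bs) /\ tlen u = N /\ (rho <= troot u)%N.

Lemma troot_lt (t : term X) : (troot t < tlen t)%N.
Proof.
elim: t => // u IHu v IHv; rewrite troot_Prod /=.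
have : (rr v <= tlen v)%N by case: v IHv => //= *; exact: ltnW.
lia.
Qed.

Lemma rr_mono (v v' : term X) : tlen v = tlen v' -> (troot v <= troot v')%N -> (rr v <= rr v')%N.
Proof.
case: v => [x|v1 v2]; case: v' => [x'|v1' v2'] //=.
  by have := tlen_gt0 v1'; have := tlen_gt0 v2'; lia.
by have := tlen_gt0 v1; have := tlen_gt0 v2; lia.
Qed.

Lemma rr_Prod (u v : term X) : rr (Prod u v) = troot (Prod u v). Proof. by []. Qed.
Lemma troot_Letter (x : X) : troot (Letter x) = 0%N. Proof. by []. Qed.

Lemma lns_rcons a bs b : lns a (rcons bs b) = Prod (lns a bs) (simp b.1 b.2).
Proof. by rewrite /lns -cats1 lnsT_cat. Qed.

Lemma LNSP_ctxL N rho (b : seq X * X) :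
  (forall v, LNSP N rho v -> LNSP (N + tlen (simp b.1 b.2)) (rho + 1) (Prod v (simp b.1 b.2))).
Proof.
move=> v [[a [bs ->]] [Hl Hr]]; split; first by exists a, (rcons bs b); rewrite lns_rcons.
by split; [rewrite /= Hl | rewrite troot_Prod rr_simp; lia].
Qed.

Lemma claimA n (IH : forall t : term X, (tlen t <= n)%N -> inspan (LNSP (tlen t) (troot t)) [:: (1, t)])
  a bsu b bsv : (tlen (Prod (lns a bsu) (lns b bsv)) <= n.+1)%N ->
  inspan (LNSP (tlen (Prod (lns a bsu) (lns b bsv))) (troot (Prod (lns a bsu) (lns b bsv))))
    [:: (1, Prod (lns a bsu) (lns b bsv))].
Proof.
set v' := lns b bsv; move=> Hn.
case/lastP: bsu Hn => [|bsu0 g] Hn; last first.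
  rewrite lns_rcons in Hn *; set u'' := lns a bsu0; set tau := simp g.1 g.2.
  have Hl : (tlen (Prod u'' v') <= n)%N.
    by move: Hn; rewrite /= tlen_simp /u''; lia.
  have H1 := inspan_mapL (@LNSP_ctxL _ _ g) (IH _ Hl).
  have H2 := inspan_scale (sgn (tpar tau && tpar v')) H1.
  apply: (inspan_eqv _ (inspan_mono _ H2)).
    move=> A mul Apar f M; rewrite /= ev1 ev1 mulr1 scale1r; exact: RC_t M _ _ _.
  move=> w [[a' [bs' ->]] [Hl' Hr']]; split; first by exists a', bs'.
  split; first by rewrite Hl' /= /tau; lia.
  move: Hr'; rewrite !troot_Prod rr_simp /= => Hr'.
  by rewrite /u'' /lns troot_lnsT /= in Hr' *; lia.
case/lastP: bsv @v' Hn => [|bs0 be] v' Hn.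
  apply: inspan_single; split; first by exists a, [:: ([::], b)].
  by split.
rewrite /v' lns_rcons in Hn *; set v'' := lns b bs0; set sig := simp be.1 be.2.
have Hl : (tlen (Prod (Letter a) v'') <= n)%N by move: Hn; rewrite /= tlen_simp /v''; lia.
have H1 := inspan_mapL (@LNSP_ctxL _ _ be) (IH _ Hl).
pose eps : k := sgn (par a && tpar v'').
have E : eqv [:: (1, Prod (Letter a) (Prod v'' sig))]
  ([:: (1, Prod (Prod (Letter a) v'') sig)] ++ [:: (eps * 1, Prod v'' (Prod (Letter a) sig))]
   ++ [:: (- eps * 1, Prod (Prod v'' (Letter a)) sig)]).
  move=> A mul Apar f M; rewrite !evE_cat !ev1 !scale1r !mulr1.
  have := LS_t M (Letter a) v'' sig; rewrite /= => H.
  by rewrite /eps scaleNr -scalerBr -H addrC subrK.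
apply: (inspan_eqv E); apply: inspan_cat; last apply: inspan_cat.
- apply: inspan_mono H1 => w [[a' [bs' ->]] [Hl' Hr']]; split; first by exists a', bs'.
  split; first by rewrite Hl' /= /sig ?tlen_simp; lia.
  move: Hr'; rewrite !troot_Prod rr_Prod troot_Prod /sig rr_simp /lns /lnsT /=.
  have := rr_ge v''; lia.
- apply: (inspan_scale eps (e := [:: (1, _)])); apply: inspan_single; split.
    by exists b, (rcons bs0 (a :: be.1, be.2)); rewrite lns_rcons.
  split; first by rewrite /= /sig !tlen_simp /=; lia.
  by rewrite !troot_Prod ?rr_Prod ?troot_Prod /sig ?rr_simp /lns /=; lia.
- apply: (inspan_scale (- eps) (e := [:: (1, _)])); apply: inspan_single; split.
    by exists b, (bs0 ++ [:: ([::], a); be]); rewrite /lns lnsT_cat.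
  split; first by rewrite /= /sig !tlen_simp /=; lia.
  by rewrite !troot_Prod ?rr_Prod ?troot_Prod /sig ?rr_simp /lns /=; lia.
Qed.


Lemma partA n : forall t : term X, (tlen t <= n)%N -> inspan (LNSP (tlen t) (troot t)) [:: (1, t)].
Proof.
elim: n => [|n IH] t Hn; first by have := tlen_gt0 t; lia.
case: t Hn => [a|u v] Hn.
  by apply: inspan_single; split; first by exists a, [::].
have Hu : (tlen u <= n)%N by move: Hn => /=; have := tlen_gt0 v; lia.
have Hv : (tlen v <= n)%N by move: Hn => /=; have := tlen_gt0 u; lia.
have S1 := inspan_mapR (w := u)
  (Q := fun w => exists v', LNSP (tlen v) (troot v) v' /\ w = Prod u v')
  (fun v' H => ex_intro _ v' (conj H erefl)) (IH v Hv).
apply: (inspan_trans S1) => w0 [v' [[[b [bsv ->]] [Lv' Rv']] ->]].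
have S2 := inspan_mapL (w := lns b bsv)
  (Q := fun w => exists u', LNSP (tlen u) (troot u) u' /\ w = Prod u' (lns b bsv))
  (fun u' H => ex_intro _ u' (conj H erefl)) (IH u Hu).
apply: (inspan_trans S2) => w1 [u' [[[a [bsu ->]] [Lu' Ru']] ->]].
have Hn' : (tlen (Prod (lns a bsu) (lns b bsv)) <= n.+1)%N by rewrite /= Lu' Lv'.
apply: inspan_mono (claimA IH Hn') => w [H1 [H2 H3]]; split => //; split.
  by rewrite H2 /= Lu' Lv'.
apply: leq_trans H3; rewrite !troot_Prod; apply: leq_add => //.
by apply: rr_mono => //; rewrite Lv'.
Qed.

Lemma mainM (char2 : (2%:R : k) != 0) N m : forall t : term X, (N - troot t <= m)%N -> tlen t = N ->
  inspan (TabP N (troot t)) [:: (1, t)].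
Proof.
elim: m => [|m IH] t Hm Ht; first by have := troot_lt t; lia.
have HA := partA (leqnn (tlen t)); rewrite Ht in HA.
apply: (inspan_trans HA) => u [[a [bs ->]] [Hl Hr]].
have Hgt v : tlen v = N -> (troot t < troot v)%N -> inspan (TabP N (troot t)) [:: (1, v)].
  move=> Hlv Hrv.
  have Hm' : (N - troot v <= m)%N by have := troot_lt t; lia.
  have H := IH v Hm' Hlv.
  by apply: inspan_mono H => w [? [? ?]]; split => //; split => //; lia.
case: (ltngtP (troot t) (troot (lns a bs))) => Hc; first exact: Hgt.
  by lia.
have HB := partB char2 a bs.
apply: (inspan_trans HB) => v [[T1 [T2 T3]]|[H1 H2]].
  apply: inspan_single; split => //; split.
    by rewrite T2 -(tlen_lns a).
  by rewrite Hc troot_lns.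
apply: Hgt; first by rewrite H1 -(tlen_lns a).
by rewrite Hc troot_lns.
Qed.

End Main.

Local Close Scope ring_scope.
Unset Implicit Arguments.

Theorem lemma2p10 (k : fieldType) (d : Order.disp_t) (X : orderType d)
  (par : X -> bool)
  (wfX : well_founded (fun x y : X => (x < y)%O))
  (char_k : (2%:R : k)%R != 0%R)
  (lam : term X) :
  exists (n : nat) (alpha : 'I_n -> k) (lams : 'I_n -> term X),
    (forall i, [/\ is_tableau par (lams i), tlen (lams i) = tlen lam
                 & (troot lam <= troot (lams i))%N]) /\
    (forall (A : lmodType k) (mul : A -> A -> A) (Apar : bool -> pred A),
       is_GDN_super mul Apar ->
       forall f : X -> A, (forall x, Apar (par x) (f x)) ->
       teval mul f lam = (\sum_(i < n) alpha i *: teval mul f (lams i))%R).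
Proof.
have := @mainM k d X par char_k (tlen lam) (tlen lam) lam (leq_subr _ _) erefl.
move=> [e [He E]].
exists (size e), (fun i => (nth (0%R, lam) e i).1), (fun i => (nth (0%R, lam) e i).2).
split.
  have Hn : forall j, (j < size e)%N -> TabP par (tlen lam) (troot lam) (nth (0%R, lam) e j).2.
    move=> {E}; elim: e He => [|p e IH] //= [Hp He] [|j] Hj //=.
    by apply: IH.
  move=> i; have := Hn i (ltn_ord i).
  by case=> [? [? ?]]; split.
move=> A mul Apar HG f Hf.
have M : models par mul Apar f by split.
have := E A mul Apar f M; rewrite ev1 scale1r => ->.
rewrite /evE (big_nth (0%R, lam)) big_mkord.
by [].
Qed.
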